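(* For $\alpha\in(-\pi/2,\pi/2]$ and $\beta\in(-\pi/4,0)\cup(0,\pi/4)$ let $$Q(\alpha)=\begin{bmatrix}\cos\alpha&\sin\alpha\\-\sin\alpha&\cos\alpha\end{bmatrix},\qquad \mathbf{h}(\beta)=\begin{bmatrix}\cos\beta\\ \jmath\sin\beta\end{bmatrix},\qquad \mathbf{g}(\alpha,\beta)=Q(\alpha)\mathbf{h}(\beta)\in\mathbb{C}^2,$$ where $\jmath=\sqrt{-1}$. For such $\alpha_p,\beta_p,\alpha_q,\beta_q$, put $\mathbf{g}_p=\mathbf{g}(\alpha_p,\beta_p)$ and $\mathbf{g}_q=\mathbf{g}(\alpha_q,\beta_q)$. Then $\lvert\mathbf{g}_p^{\mathsf H}\mathbf{g}_q\rvert=1$ if and only if $\alpha_p=\alpha_q+k\pi$ for some $k\in\mathbb{Z}$ and $\beta_p=\beta_q$.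
   Context: $X^{\mathsf H}$ denotes conjugate transpose. *)

(* Defs.v *)
From Stdlib Require Import Reals.
From Coquelicot Require Import Coquelicot.
Open Scope R_scope.

Definition vec2 := (C * C)%type.
Definition mat2 := ((C * C) * (C * C))%type.  (* rows *)

Definition matvec (M : mat2) (v : vec2) : vec2 :=
  let '((a, b), (c, d)) := M in
  let '(x, y) := v in
  (Cplus (Cmult a x) (Cmult b y), Cplus (Cmult c x) (Cmult d y)).

Definition herm_inner (v w : vec2) : C :=
  Cplus (Cmult (Cconj (fst v)) (fst w)) (Cmult (Cconj (snd v)) (snd w)).

Definition Qmat (a : R) : mat2 :=
  ((RtoC (cos a), RtoC (sin a)), (RtoC (- sin a), RtoC (cos a))).

Definition hvec (b : R) : vec2 := (RtoC (cos b), Cmult Ci (RtoC (sin b))).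

Definition gvec (a b : R) : vec2 := matvec (Qmat a) (hvec b).

Definition alpha_ok (a : R) : Prop := - PI / 2 < a <= PI / 2.
Definition beta_ok (b : R) : Prop := - PI / 4 < b < PI / 4 /\ b <> 0.

(* Main.v *)
Require Import Defs.
From Stdlib Require Import Reals ZArith Lra Psatz.
From Coquelicot Require Import Coquelicot.
Open Scope R_scope.

Lemma inner_parts ap bp aq bq :
  herm_inner (gvec ap bp) (gvec aq bq) =
  (cos (ap - aq) * cos (bp - bq), sin (aq - ap) * sin (bp + bq)).
Proof.
  rewrite !cos_minus, sin_minus, sin_plus.
  unfold herm_inner, gvec, matvec, Qmat, hvec, Cconj, Cplus, Cmult, RtoC, Ci; simpl.
  f_equal; ring.
Qed.

Lemma sq0 x : x ^ 2 = 0 -> x = 0.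
Proof. intro H. nra. Qed.

Lemma sin0_small x : - PI < x < PI -> sin x = 0 -> x = 0.
Proof.
  intros H Hs. destruct (Rtotal_order x 0) as [Hl|[He|Hg]]; auto.
  - assert (0 < sin (- x)) by (apply sin_gt_0; lra).
    rewrite sin_neg in H0; lra.
  - assert (0 < sin x) by (apply sin_gt_0; lra). lra.
Qed.

Theorem lemma6 (ap bp aq bq : R) :
  alpha_ok ap -> beta_ok bp -> alpha_ok aq -> beta_ok bq ->
  (Cmod (herm_inner (gvec ap bp) (gvec aq bq)) = 1 <->
   ((exists k : Z, ap = aq + IZR k * PI) /\ bp = bq)).
Proof.
  unfold alpha_ok, beta_ok. intros Ha Hb Hc Hd.
  pose proof PI_RGT_0.
  rewrite inner_parts. unfold Cmod. cbn [fst snd].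
  set (C := cos (ap - aq)). set (S := sin (aq - ap)).
  assert (HCS : C^2 + S^2 = 1).
  { unfold C, S. replace (aq - ap) with (- (ap - aq)) by ring.
    rewrite sin_neg. pose proof (sin2_cos2 (ap - aq)). unfold Rsqr in H0. nra. }
  pose proof (sin2_cos2 (bp - bq)) as E1. pose proof (sin2_cos2 (bp + bq)) as E2.
  unfold Rsqr in E1, E2.
  split.
  - intro Hm.
    assert (Hx : (C * cos (bp - bq)) ^ 2 + (S * sin (bp + bq)) ^ 2 = 1).
    { rewrite <- (pow2_sqrt ((C * cos (bp - bq)) ^ 2 + (S * sin (bp + bq)) ^ 2)).
      - rewrite Hm; ring.
      - nra. }
    assert (Hz : C^2 * sin (bp - bq) ^ 2 + S^2 * cos (bp + bq) ^ 2 = 0).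
    { replace (sin (bp - bq) ^ 2) with (1 - cos (bp - bq) ^ 2) by lra.
      replace (cos (bp + bq) ^ 2) with (1 - sin (bp + bq) ^ 2) by lra.
      replace (C ^ 2 * (1 - cos (bp - bq) ^ 2) + S ^ 2 * (1 - sin (bp + bq) ^ 2))
        with ((C^2 + S^2) - ((C * cos (bp - bq)) ^ 2 + (S * sin (bp + bq)) ^ 2)) by ring.
      rewrite HCS, Hx; ring. }
    assert (Hcos : 0 < cos (bp + bq)) by (apply cos_gt_0; lra).
    assert (T1 : 0 <= C^2 * sin (bp - bq) ^ 2) by (apply Rmult_le_pos; apply pow2_ge_0).
    assert (T2 : 0 <= S^2 * cos (bp + bq) ^ 2) by (apply Rmult_le_pos; apply pow2_ge_0).
    assert (Z2 : S^2 * cos (bp + bq) ^ 2 = 0) by lra.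
    assert (HS : S = 0).
    { apply Rmult_integral in Z2. destruct Z2 as [Z|Z].
      - apply sq0; exact Z.
      - apply sq0 in Z. lra. }
    assert (HC2 : C^2 = 1) by (rewrite HS in HCS; lra).
    assert (Hsd : sin (bp - bq) = 0).
    { rewrite HC2 in Hz. apply sq0. lra. }
    apply sin0_small in Hsd; [|lra].
    apply sin0_small in HS; [|lra].
    split; [exists 0%Z; simpl; lra | lra].
  - intros [[k Hk] Hbe].
    assert (HS : S = 0).
    { unfold S. replace (aq - ap) with (IZR (- k) * PI) by (rewrite opp_IZR; lra).
      apply sin_eq_0_1. eauto. }
    subst bq. replace (bp - bp) with 0 by ring. rewrite cos_0, HS.
    replace ((C * 1) ^ 2 + (0 * sin (bp + bp)) ^ 2) with 1 by nra.
    apply sqrt_1.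
Qed.
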